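(* Let $\Gamma$ be a typing environment and $\tau$ a refinement type all of whose refinements are local. Then $\Gamma\vdash\tau\preceq\lceil\tau\rceil$ and $\Gamma\vdash\lceil\tau\rceil\preceq\tau$ hold in the gradual refinement type system.
   Context: Refinement types $\tau ::= \{v{:}b\mid p\}\mid x{:}\tau\to\tau$ with $b\in\{\mathrm{Int},\mathrm{Bool}\}$. A predicate $p$ refining $v$ is local iff for every closing substitution $\theta$ there is a value $w$ with $\theta(p[w/v])$ evaluating to true. $\lceil\tau\rceil$ replaces every refinement by the unknown refinement: $\lceil\{v{:}b\mid p\}\rceil=\{v{:}b\mid ?\}$, $\lceil x{:}\tau_x\to\tau\rceil = x{:}\lceil\tau_x\rceil\to\lceil\tau\rceil$. Gradual predicates are $p$ or $p\land ?$ ($p$ local; $?$ means $\mathrm{true}\land ?$). Specificity: $p_1\preceq p_2$ iff for all closing $\theta$, $\theta(p_1)$ true implies $\theta(p_2)$ true. Concretization: $\gamma(p)=\{p\}$, $\gamma(p\land ?)=\{p'\mid p'\preceq p,\ p'$ local$\}$, extended pointwise to types and environments. Gradual subtyping: for functions, $\Gamma\vdash x{:}\tau_{x1}\to\tau_1\preceq x{:}\tau_{x2}\to\tau_2$ if $\Gamma\vdash\tau_{x2}\preceq\tau_{x1}$ and $\Gamma,x{:}\tau_{x2}\vdash\tau_1\preceq\tau_2$; for base types, $\tilde\Gamma\vdash\{v{:}b\mid\tilde p_1\}\preceq\{v{:}b\mid\tilde p_2\}$ holds iff there exist $\Gamma'\in\gamma(\tilde\Gamma)$, $p_i\in\gamma(\tilde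 p_i)$ such that for every substitution $\theta$ of the variables of $\Gamma',v{:}b$ by values of their types, $\theta(p_1)$ true implies $\theta(p_2)$ true. *)

(* Defs.v *)
(* Shallow embedding of the refinement logic of
   "Gradual Refinement Types": predicates are boolean-valued functions of
   a valuation (closing substitution) of the variables. *)
From Stdlib Require Import ZArith List.
Import ListNotations.

Inductive base : Type := TInt | TBool.

Inductive value : Type := VInt (z : Z) | VBool (b : bool).

Definition has_base (w : value) (b : base) : Prop :=
  match w, b with
  | VInt _, TInt => True
  | VBool _, TBool => True
  | _, _ => False
  end.

(** Program variables are named by naturals; [V] is the distinguished
    refinement variable v. *)
Definition ident := nat.
Inductive var : Type := V | X (x : ident).

Definition var_eqb (a c : var) : bool :=
  match a, c with
  | V, V => true
  | X x, X y => Nat.eqb x y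
  | _, _ => false
  end.

Definition valuation := var -> value.

Definition upd (th : valuation) (a : var) (w : value) : valuation :=
  fun c => if var_eqb c a then w else th c.

Definition pred := valuation -> bool.

Definition ptrue : pred := fun _ => true.

Definition local (b : base) (p : pred) : Prop :=
  forall th : valuation, exists w : value, has_base w b /\ p (upd th V w) = true.

Definition spec (p1 p2 : pred) : Prop :=
  forall th : valuation, p1 th = true -> p2 th = true.

Inductive ty : Type :=
| TBase (b : base) (p : pred)
| TFun (x : ident) (tx t : ty).

Inductive gpred : Type :=
| GExact (p : pred)
| GImprecise (p : pred).   (* p /\ ? *)

Inductive gty : Type :=
| GBase (b : base) (gp : gpred)
| GFun (x : ident) (tx t : gty).

(** The unknown refinement ? = true /\ ? *)
Definition gunknown : gpred := GImprecise ptrue.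

Fixpoint lift (t : ty) : gty :=
  match t with
  | TBase b p => GBase b (GExact p)
  | TFun x tx t => GFun x (lift tx) (lift t)
  end.

Fixpoint ceil (t : ty) : gty :=
  match t with
  | TBase b _ => GBase b gunknown
  | TFun x tx t => GFun x (ceil tx) (ceil t)
  end.

Fixpoint all_local (t : ty) : Prop :=
  match t with
  | TBase b p => local b p
  | TFun _ tx t => all_local tx /\ all_local t
  end.

Definition gamma_pred (b : base) (gp : gpred) (p' : pred) : Prop :=
  match gp with
  | GExact p => p' = p
  | GImprecise p => spec p' p /\ local b p'
  end.

Fixpoint gamma_ty (g : gty) (t : ty) : Prop :=
  match g, t with
  | GBase b gp, TBase b' p => b' = b /\ gamma_pred b gp p
  | GFun x gx g1, TFun x' tx t1 => x' = x /\ gamma_ty gx tx /\ gamma_ty g1 t1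
  | _, _ => False
  end.

(** Environments: lists of bindings, most recent binding first. *)
Definition env := list (ident * ty).
Definition genv := list (ident * gty).

Definition gamma_env (G : genv) (E : env) : Prop :=
  Forall2 (fun gb eb => fst eb = fst gb /\ gamma_ty (snd gb) (snd eb)) G E.

Definition wf_gpred (b : base) (gp : gpred) : Prop :=
  match gp with
  | GExact _ => True
  | GImprecise p => local b p
  end.

Fixpoint wf_gty (g : gty) : Prop :=
  match g with
  | GBase b gp => wf_gpred b gp
  | GFun _ gx g1 => wf_gty gx /\ wf_gty g1
  end.

Definition wf_genv (G : genv) : Prop := Forall (fun gb => wf_gty (snd gb)) G.

Definition env_sat (E : env) (th : valuation) : Prop :=
  Forall (fun eb =>
            match snd eb with
            | TBase b q => has_base (th (X (fst eb))) b /\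
                           q (upd th V (th (X (fst eb)))) = true
            | TFun _ _ _ => True
            end) E.

Definition entails (E : env) (b : base) (p1 p2 : pred) : Prop :=
  forall th : valuation, has_base (th V) b -> env_sat E th ->
    p1 th = true -> p2 th = true.

Inductive gsub : genv -> gty -> gty -> Prop :=
| GSubBase : forall G b gp1 gp2,
    (exists E p1 p2, gamma_env G E /\ gamma_pred b gp1 p1 /\
                     gamma_pred b gp2 p2 /\ entails E b p1 p2) ->
    gsub G (GBase b gp1) (GBase b gp2)
| GSubFun : forall G x tx1 t1 tx2 t2,
    gsub G tx2 tx1 ->
    gsub ((x, tx2) :: G) t1 t2 ->
    gsub G (GFun x tx1 t1) (GFun x tx2 t2).

(* Main.v *)
Require Import Defs.
From Stdlib Require Import ZArith List.

Fixpoint conc (g : gty) : ty :=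
  match g with
  | GBase b (GExact p) => TBase b p
  | GBase b (GImprecise p) => TBase b p
  | GFun x gx g1 => TFun x (conc gx) (conc g1)
  end.

Lemma conc_ok g : wf_gty g -> gamma_ty g (conc g).
Proof.
  induction g as [b gp|x gx IH1 g1 IH2]; simpl.
  - destruct gp; simpl; intros; split; auto. split; auto. intros th H'; exact H'.
  - intros [H1 H2]; auto.
Qed.

Lemma env_ok G : wf_genv G -> exists E, gamma_env G E.
Proof.
  induction G as [|[x g] G IH]; intros H.
  - exists nil; constructor.
  - inversion H; subst. destruct (IH H3) as [E HE].
    exists ((x, conc g) :: E). constructor; auto. simpl; split; auto.
    apply conc_ok; auto.
Qed.

Lemma local_true b : local b ptrue.
Proof.
  intros th. destruct b.
  - exists (VInt 0%Z); simpl; auto.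
  - exists (VBool true); simpl; auto.
Qed.

Lemma wf_lift t : wf_gty (lift t).
Proof. induction t; simpl; auto. Qed.

Lemma wf_ceil t : wf_gty (ceil t).
Proof. induction t; simpl; auto. apply local_true. Qed.

Theorem mainTheorem6 (G : genv) (t : ty) :
  wf_genv G -> all_local t ->
  gsub G (lift t) (ceil t) /\ gsub G (ceil t) (lift t).
Proof.
  revert G. induction t as [b p|x tx IH1 t1 IH2]; intros G HG Hl; simpl in *.
  - destruct (env_ok G HG) as [E HE]. split; constructor; exists E, p, p;
      simpl; repeat split; auto; try (intros th Hth; reflexivity);
      intros th _ _ H; exact H.
  - destruct Hl as [L1 L2]. split; constructor.
    + apply (IH1 G HG L1).
    + apply IH2; auto. constructor; auto. apply wf_ceil.
    + apply (IH1 G HG L1).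
    + apply IH2; auto. constructor; auto. apply wf_lift.
Qed.
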